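(* Let $K\ge 3$, $\alpha\in[2:K-1]$, $F\in\mathbb{Z}^+$, and consider the symmetric $(K,\alpha,F)$ FDS structure with $N=F\binom{K}{\alpha}\ge K$. For $t\in[0:K]$ let $R_{\mathrm{MAN}}(t)=\frac{K-t}{t+1}$ denote the load of the Maddah-Ali–Niesen scheme at cache size $M=tN/K$, and write $R^\star_{\mathrm{u},\mathrm{s}}(t)$ for $R^\star_{\mathrm{u},\mathrm{s}}(tN/K)$. Then $$\frac{R^\star_{\mathrm{u},\mathrm{s}}(t)}{R_{\mathrm{MAN}}(t)}\ge 1\quad\text{for all } t\in[0:\alpha-1],\qquad \frac{R^\star_{\mathrm{u},\mathrm{s}}(t)}{R_{\mathrm{MAN}}(t)}> 1\quad\text{for all } t\in\{1,\dots,\alpha-2\}.$$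
   Context: Notation: $[n]=\{1,\dots,n\}$, $[a:b]=\{a,\dots,b\}$. Symmetric $(K,\alpha,F)$ FDS structure: the library consists of $N=F\binom{K}{\alpha}$ distinct files $W_{f,\mathcal S}$, indexed by $f\in[F]$ and $\mathcal S\subseteq[K]$ with $|\mathcal S|=\alpha$; the file class $\mathcal W_{\mathcal S}=\{W_{f,\mathcal S}:f\in[F]\}$ is of interest exactly to the users in $\mathcal S$. The file demand set (FDS) of user $k\in[K]$ is $\mathcal F_k=\{W_{f,\mathcal S}: f\in[F],\ |\mathcal S|=\alpha,\ k\in\mathcal S\}$. Caching model (centralized): a server stores the $N$ files, each consisting of $B$ independent uniformly random bits, and is connected to $K$ users by an error-free shared broadcast link; each user has a cache of $MB$ bits. In the placement phase the server fills the caches without knowing the future demands. In the delivery phase each user $k$ requests one file in $\mathcal F_k$; the server then broadcasts a message from which each user must decode its requested file using its cache contents. A pair $(M,R)$ is achievable if there is a scheme such that for every admissible demand at most $RB$ bits are transmitted; the optimal worst-case load is the infimum of achievable $R$. Uncoded and selfish placement: caches contain plain copies of bits of files, and user $k$ may cache bits of $W_{f,\mathcal S}$ only if $k\in\mathcal S$. $R^\star_{\mathrm{u},\mathrm{s}}(M)$ is the optimal worst-case load when the placement is restricted to be uncoded and selfish. *)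

(* Defs.v *)
From HB Require Import structures.
From mathcomp Require Import all_boot all_order all_algebra.
From mathcomp Require Import boolp classical_sets reals.

Set Implicit Arguments.
Unset Strict Implicit.
Unset Printing Implicit Defensive.

Import Order.TTheory GRing.Theory Num.Theory.
Local Open Scope ring_scope.

(* File indices W_{f,S} of the symmetric (K,alpha,F) FDS structure:
   f in [F] (as 'I_F), S a subset of the K users ('I_K) with |S| = alpha. *)
Definition fileT (K alpha F : nat) : finType :=
  {p : 'I_F * {set 'I_K} | #|p.2| == alpha}.

Definition fileSet K alpha F (w : fileT K alpha F) : {set 'I_K} := (val w).2.

Definition bitT K alpha F (B : nat) : finType := (fileT K alpha F * 'I_B)%type.

Definition libT K alpha F B := {ffun bitT K alpha F B -> bool}.

Definition cacheof K alpha F B (Z : {set bitT K alpha F B})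
  (W : libT K alpha F B) : {ffun bitT K alpha F B -> option bool} :=
  [ffun x => if x \in Z then Some (W x) else None].

Definition fileof K alpha F B (W : libT K alpha F B) (w : fileT K alpha F)
  : {ffun 'I_B -> bool} := [ffun i => W (w, i)].

Definition admissible K alpha F (d : {ffun 'I_K -> fileT K alpha F}) : Prop :=
  forall k, k \in fileSet (d k).

(* (M,R) achievable with uncoded and selfish placement (zero-error,
   for every realization of the library, for some file length B >= 1). *)
Definition achievable_us (R : realType) (K alpha F : nat) (M Rl : R) : Prop :=
  exists B : nat, (0 < B)%N /\
  exists Z : 'I_K -> {set bitT K alpha F B},
    (forall k, (#|Z k|%:R <= M * B%:R)) /\
    (forall k x, x \in Z k -> k \in fileSet x.1) /\
    forall d : {ffun 'I_K -> fileT K alpha F}, admissible d ->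
      exists L : nat, L%:R <= Rl * B%:R /\
      exists enc : libT K alpha F B -> L.-tuple bool,
        forall k : 'I_K,
        exists dec : L.-tuple bool -> {ffun bitT K alpha F B -> option bool} ->
                     {ffun 'I_B -> bool},
          forall W : libT K alpha F B,
            dec (enc W) (cacheof (Z k) W) = fileof W (d k).

Definition Rstar_us (R : realType) (K alpha F : nat) (M : R) : R :=
  inf (fun Rl : R => achievable_us K alpha F M Rl).

Definition Nfiles (K alpha F : nat) : nat := (F * 'C(K, alpha))%N.

Definition Rstar_t (R : realType) (K alpha F t : nat) : R :=
  Rstar_us K alpha F ((t%:R * (Nfiles K alpha F)%:R) / K%:R).

Definition R_MAN (R : realType) (K t : nat) : R := (K%:R - t%:R) / (t%:R + 1).

(* Main.v *)
Require Import Defs.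
From HB Require Import structures.
From mathcomp Require Import all_boot all_order all_algebra.
From mathcomp Require Import boolp classical_sets reals.
Import Order.TTheory GRing.Theory Num.Theory.
Local Open Scope ring_scope.
From mathcomp Require Import all_fingroup.
From mathcomp Require Import zify ring lra.
Import Order.TTheory GRing.Theory Num.Theory.
Set Implicit Arguments.
Unset Strict Implicit.
Unset Printing Implicit Defensive.

Local Open Scope nat_scope.
Definition Uset K alpha F B (Z : 'I_K -> {set bitT K alpha F B})
  (d : {ffun 'I_K -> fileT K alpha F}) (pi : {perm 'I_K}) (p : 'I_K)
  : {set bitT K alpha F B} :=
  [set x | (x.1 == d (pi p)) && [forall q : 'I_K, (q <= p) ==> (x \notin Z (pi q))]].

Lemma chain_bound K alpha F B (Z : 'I_K -> {set bitT K alpha F B})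
  (d : {ffun 'I_K -> fileT K alpha F}) (L : nat)
  (enc : libT K alpha F B -> L.-tuple bool)
  (Hdec : forall k : 'I_K,
        exists dec : L.-tuple bool -> {ffun bitT K alpha F B -> option bool} ->
                     {ffun 'I_B -> bool},
          forall W : libT K alpha F B,
            dec (enc W) (cacheof (Z k) W) = fileof W (d k))
  (pi : {perm 'I_K}) (Hdist : forall p q, d (pi p) = d (pi q) -> p = q) :
  \sum_(p : 'I_K) #|Uset Z d pi p| <= L.
Proof.
set Ut := [set x | [exists p, x \in Uset Z d pi p]].
have step1 : \sum_(p : 'I_K) #|Uset Z d pi p| <= #|Ut|.
  have cE : forall A : {set bitT K alpha F B}, #|A| = \sum_x (x \in A).
    by move=> A; rewrite -sum1_card big_mkcond; apply: eq_bigr => x _; case: (x \in A).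
  rewrite [#|Ut|]cE (eq_bigr (fun p => \sum_x (x \in Uset Z d pi p))); last by move=> p _; rewrite cE.
  rewrite exchange_big /=.
  apply: leq_sum => x _.
  case Hxu: (x \in Ut); last first.
    rewrite big1 // => p _; case Hp: (x \in Uset Z d pi p) => //; move: Hxu; rewrite inE.
    by have -> : [exists p, x \in Uset Z d pi p] by apply/existsP; exists p.
  move: Hxu; rewrite inE => /existsP [p Hp].
  rewrite (bigD1 p) //= Hp big1 // => q Hqp.
  case Hq: (x \in Uset Z d pi q) => //; move/eqP: Hqp; case.
  apply: Hdist.
  move: Hp Hq; rewrite !inE => /andP[/eqP <- _] /andP[/eqP <- _] //.
apply: (leq_trans step1).
pose g (G : {set bitT K alpha F B}) := enc [ffun x => x \in G].
have ginj : {in powerset Ut &, injective g}.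
  move=> G G'; rewrite !powersetE => HG HG' Heq.
  have key : forall n (p : 'I_K), p < n -> forall x : bitT K alpha F B,
      x.1 = d (pi p) -> (x \in G) = (x \in G').
    elim=> [//|n IH] p Hp x Hx.
    have [dec Hd] := Hdec (pi p).
    have Hc : cacheof (Z (pi p)) [ffun x => x \in G] =
              cacheof (Z (pi p)) [ffun x => x \in G'].
      apply/ffunP => y; rewrite !ffunE.
      case Hy: (y \in Z (pi p)) => //; congr Some.
      case HyU: (y \in Ut); last first.
        have -> : (y \in G) = false by apply/negbTE/negP => /(fintype.subsetP HG); rewrite HyU.
        by have -> : (y \in G') = false by apply/negbTE/negP => /(fintype.subsetP HG'); rewrite HyU.
      move: HyU; rewrite inE => /existsP [q]; rewrite inE => /andP [/eqP Hyq /forallP Hf].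
      have Hqp : q < p.
        rewrite ltnNge; apply/negP => Hpq.
        by move: (Hf p); rewrite Hpq Hy.
      apply: (IH q) => //; exact: leq_trans Hqp Hp.
    have := Hd [ffun x => x \in G]; have := Hd [ffun x => x \in G'].
    rewrite /g in Heq; rewrite Heq Hc => -> /ffunP /(_ x.2).
    by rewrite !ffunE -Hx -surjective_pairing.
  apply/setP => x.
  case HxU: (x \in Ut); last first.
    have -> : (x \in G) = false by apply/negbTE/negP => /(fintype.subsetP HG); rewrite HxU.
    by have -> : (x \in G') = false by apply/negbTE/negP => /(fintype.subsetP HG'); rewrite HxU.
  move: HxU; rewrite inE => /existsP [q]; rewrite inE => /andP [/eqP Hxq _].
  exact: (key q.+1 q (ltnSn _)).
have := leq_imset_card g (powerset Ut).
rewrite (card_in_imset ginj) card_powerset => _.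
have Hle : #|g @: powerset Ut| <= #|{: L.-tuple bool}| by apply: max_card.
rewrite (card_in_imset ginj) card_powerset card_tuple card_bool in Hle.
by rewrite -(leq_exp2l _ _ (ltnSn 1)).
Qed.
Definition rotn K (p o : nat) := if p + o < K then p + o else p + o - K.
Lemma vinsub K (p : 'I_K) n : n < K -> val (insubd p n) = n.
Proof. by move=> H; rewrite val_insubd H. Qed.

Definition Pw K alpha (p : 'I_K) : {set 'I_K} :=
  [set (insubd p (rotn K p o) : 'I_K) | o : 'I_alpha].

Definition Aw K alpha (p : 'I_K) : {set 'I_K} :=
  [set q : 'I_K | p < q < p + alpha].

Lemma rotn_lt K (p : 'I_K) o : o < K -> rotn K p o < K.
Proof. rewrite /rotn; case: ifP; have := ltn_ord p; lia. Qed.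

Lemma mem_Pw K alpha (p q : 'I_K) : alpha <= K ->
  (q \in Pw alpha p) = (p <= q < p + alpha) || (q + K < p + alpha).
Proof.
move=> HaK; have Hp := ltn_ord p; have Hq := ltn_ord q.
apply/imsetP/idP.
  move=> [o _ ->]; have Ho := ltn_ord o.
  rewrite vinsub; last by apply: rotn_lt; lia.
  rewrite /rotn; case: ifP; lia.
move=> H.
have Ho : (if p <= q then q - p else q + K - p) < alpha.
  by case: ifP; lia.
exists (Ordinal Ho) => //; apply: val_inj => /=.
rewrite vinsub; last by apply: rotn_lt; case: ifP; lia.
rewrite /rotn; case: ifP; case: ifP; lia.
Qed.

Lemma card_Pw K alpha (p : 'I_K) : alpha <= K -> #|Pw alpha p| = alpha.
Proof.
move=> HaK; rewrite card_imset ?card_ord //.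
move=> o1 o2 /(congr1 val); have H1 := ltn_ord o1; have H2 := ltn_ord o2.
rewrite !vinsub; try (apply: rotn_lt; lia).
move=> H; apply: val_inj => /=; move: H; rewrite /rotn.
have := ltn_ord p; case: ifP; case: ifP; lia.
Qed.

Lemma Pw_self K alpha (p : 'I_K) : 0 < alpha <= K -> p \in Pw alpha p.
Proof. move=> /andP[H0 H1]; rewrite mem_Pw //; lia. Qed.

Lemma Pw_inj K alpha (p q : 'I_K) : 0 < alpha -> alpha < K ->
  Pw alpha p = Pw alpha q -> p = q.
Proof.
move=> H0 HaK.
wlog Hpq : p q / p <= q.
  move=> Hw E; case: (leqP p q) => H; first exact: Hw.
  by symmetry; apply: Hw => //; lia.
move=> E; apply: val_inj; apply/eqP; rewrite /= eqn_leq Hpq /= leqNgt; apply/negP => Hlt.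
have Hp := ltn_ord p; have Hq := ltn_ord q.
have HqP : q \in Pw alpha p by rewrite E Pw_self //; lia.
rewrite mem_Pw in HqP; last by lia.
pose e := (insubd p (if p + alpha < K then p + alpha else p + alpha - K) : 'I_K).
have He : val e = (if p + alpha < K then p + alpha else p + alpha - K).
  by rewrite vinsub //; case: ifP; lia.
have H1 : e \notin Pw alpha p.
  by rewrite mem_Pw ?He; [case: ifP; lia | lia].
have H2 : e \in Pw alpha q.
  by rewrite mem_Pw ?He; [move: HqP; case: ifP; lia | lia].
by move: H1; rewrite E H2.
Qed.

Lemma Aw_sub K alpha (p : 'I_K) : alpha <= K -> Aw alpha p \subset Pw alpha p.
Proof.
move=> HaK; apply/fintype.subsetP => q; rewrite inE mem_Pw //; lia.
Qed.

Lemma Pw_late K alpha (p q : 'I_K) : alpha < K ->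
  q \in Pw alpha p -> p < q -> q \in Aw alpha p.
Proof.
move=> HaK; rewrite mem_Pw ?inE; last by lia.
have := ltn_ord q; lia.
Qed.

Lemma card_Aw K alpha (p : 'I_K) : 0 < alpha ->
  minn (alpha - 1) (K - 1 - p) <= #|Aw alpha p|.
Proof.
move=> H0; set m := minn _ _.
have Hp := ltn_ord p.
pose g (o : 'I_m) := (insubd p (p + 1 + o) : 'I_K).
have Hg : forall o : 'I_m, p + 1 + o < K.
  by move=> o; have := ltn_ord o; rewrite /m; lia.
have ginj : injective g.
  move=> o1 o2 /(congr1 val); rewrite !vinsub ?Hg // => H; apply: val_inj => /=; lia.
rewrite -[X in X <= _]card_ord -(card_imset _ ginj).
apply: subset_leq_card; apply/fintype.subsetP => q /imsetP [o _ ->].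
rewrite inE /g vinsub ?Hg //; have := ltn_ord o; rewrite /m; lia.
Qed.
Lemma flag_trans (T : finType) (S C S' C' : {set T}) :
  C \subset S -> C' \subset S' -> #|S| = #|S'| -> #|C| = #|C'| ->
  exists s : {perm T}, s @: S = S' /\ s @: C = C'.
Proof.
move=> HCS HCS' HS HC.
have HD : forall A B : {set T}, B \subset A -> #|A :\: B| = #|A| - #|B|.
  by move=> A B HBA; rewrite cardsD (finset.setIidPr HBA).
pose s := enum C ++ enum (S :\: C) ++ enum (~: S).
pose s' := enum C' ++ enum (S' :\: C') ++ enum (~: S').
have Hsz : size s' = size s.
  have HCc : forall A : {set T}, #|~: A| = #|T| - #|A|.
    by move=> A; rewrite -(cardsC A) addKn.
  by rewrite /s /s' !size_cat -!cardE (HD _ _ HCS) (HD _ _ HCS') !HCc HS HC.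
have Hu' : uniq s'.
  rewrite /s' !cat_uniq !enum_uniq /=.
  rewrite andbT; apply/andP; split.
    apply/hasPn => x; rewrite mem_cat !mem_enum !inE => /orP[/andP[H _]|H]; first by [].
    apply/negP => H'; move: H; rewrite (fintype.subsetP HCS' _ H').
    by [].
  apply/hasPn => x; rewrite !mem_enum !inE => H; apply/negP => /andP[_ H'].
  by rewrite H' in H.
have Hin : forall x, x \in s.
  move=> x; rewrite /s !mem_cat !mem_enum !inE.
  by case: (x \in C); case: (x \in S).
pose f x := nth x s' (index x s).
have Hidx : forall x, index x s < size s' by move=> x; rewrite Hsz index_mem.
have finj : injective f.
  move=> x y; rewrite /f => Hxy.
  have Hxy' : nth x s' (index x s) = nth x s' (index y s).
    by rewrite Hxy; apply: set_nth_default.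
  move/eqP: Hxy'; rewrite nth_uniq // => /eqP Hi.
  by rewrite -(nth_index x (Hin x)) Hi (set_nth_default y) ?nth_index // -Hsz.
exists (perm finj).
have HC1 : forall x, x \in C -> f x \in C'.
  move=> x Hx; rewrite /f /s index_cat mem_enum Hx.
  have Hi : index x (enum C) < size (enum C') by rewrite -cardE -HC cardE index_mem mem_enum.
  by rewrite /s' nth_cat Hi -(mem_enum (mem C')) mem_nth.
have HS1 : forall x, x \in S -> f x \in S'.
  move=> x Hx; case HxC: (x \in C); first by apply: (fintype.subsetP HCS'); apply: HC1.
  rewrite /f /s index_cat mem_enum HxC /= index_cat mem_enum inE HxC Hx /=.
  have Hi : index x (enum (S :\: C)) < size (enum (S' :\: C')).
    by rewrite -cardE HD // -HS -HC -HD // cardE index_mem mem_enum inE HxC.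
  have Es : size (enum C) = size (enum C') by rewrite -!cardE.
  rewrite /s' nth_cat Es ltnNge leq_addr /= addKn nth_cat Hi.
  have := mem_nth x Hi; rewrite mem_enum inE => /andP[_ ->] //.
have Hperm : forall A : {set T}, perm finj @: A = f @: A.
  by move=> A; apply/finset.setP => y; apply/imsetP/imsetP => [[x Hx ->]|[x Hx ->]]; exists x; rewrite ?permE.
split.
  apply/eqP; rewrite Hperm eqEcard card_imset // HS leqnn andbT.
  by apply/fintype.subsetP => y /imsetP[x Hx ->]; apply: HS1.
apply/eqP; rewrite Hperm eqEcard card_imset // HC leqnn andbT.
by apply/fintype.subsetP => y /imsetP[x Hx ->]; apply: HC1.
Qed.

Lemma card_sumP (T : finType) (P : pred T) : #|[set x | P x]| = \sum_x P x.
Proof. by rewrite -sum1_card big_mkcond; apply: eq_bigr => x _; rewrite inE; case: (P x). Qed.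

Definition Gc K alpha (p : 'I_K) (S C : {set 'I_K}) : nat :=
  #|[set pi : {perm 'I_K} | (pi @: Pw alpha p == S) && (C \subset pi @: Aw alpha p)]|.

Lemma imset_permM K (pi s : {perm 'I_K}) (A : {set 'I_K}) :
  (pi * s)%g @: A = s @: (pi @: A).
Proof.
apply/finset.setP => y; apply/imsetP/imsetP => [[x Hx ->]|[z /imsetP[x Hx ->] ->]].
  by exists (pi x); [apply: imset_f | rewrite permM].
by exists x => //; rewrite permM.
Qed.

Lemma Gc_mono K alpha (p : 'I_K) S C (s : {perm 'I_K}) :
  Gc alpha p S C <= Gc alpha p (s @: S) (s @: C).
Proof.
rewrite /Gc.
have inj : injective (fun pi : {perm 'I_K} => (pi * s)%g) by move=> x y; apply: mulIg.
rewrite -(card_imset _ inj); apply: subset_leq_card.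
apply/fintype.subsetP => z /imsetP [pi]; rewrite inE => /andP[/eqP HS HC] ->.
rewrite inE !imset_permM HS eqxx /=.
exact: imsetS.
Qed.

Lemma Gc_const K alpha (p : 'I_K) (S C S' C' : {set 'I_K}) :
  C \subset S -> C' \subset S' -> #|S| = #|S'| -> #|C| = #|C'| ->
  Gc alpha p S C = Gc alpha p S' C'.
Proof.
move=> H1 H2 H3 H4; apply/eqP; rewrite eqn_leq.
have [s [E1 E2]] := flag_trans H1 H2 H3 H4.
have [s' [E3 E4]] := flag_trans H2 H1 (esym H3) (esym H4).
apply/andP; split; first by rewrite -E1 -E2 Gc_mono.
by rewrite -E3 -E4 Gc_mono.
Qed.

Lemma Gc_sum K alpha (p : 'I_K) i : alpha <= K ->
  \sum_(S : {set 'I_K} | #|S| == alpha)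
     \sum_(C : {set 'I_K} | (C \subset S) && (#|C| == i)) Gc alpha p S C
  = K`! * 'C(#|Aw alpha p|, i).
Proof.
move=> HaK.
have E : forall S C, Gc alpha p S C = \sum_(pi : {perm 'I_K})
    ((pi @: Pw alpha p == S) && (C \subset pi @: Aw alpha p)).
  by move=> S C; rewrite /Gc card_sumP.
rewrite (eq_bigr (fun S : {set 'I_K} => \sum_(pi : {perm 'I_K}) \sum_(C : {set 'I_K} | (C \subset S) && (#|C| == i))
    ((pi @: Pw alpha p == S) && (C \subset pi @: Aw alpha p)))); last first.
  by move=> S _; rewrite exchange_big /=; apply: eq_bigr => C _; rewrite E.
rewrite exchange_big /=.
have -> : K`! = #|{: {perm 'I_K}}| by rewrite card_Sn.
rewrite -sum_nat_const.
apply: eq_bigr => pi _.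
set S0 := pi @: Pw alpha p.
have HS0 : #|S0| = alpha by rewrite card_imset ?card_Pw //; exact: perm_inj.
have HA : pi @: Aw alpha p \subset S0 by apply: imsetS; apply: Aw_sub.
rewrite (bigD1 S0) /=; last by rewrite HS0.
rewrite [X in _ + X]big1 ?addn0; last first.
  move=> S /andP[_ HS]; apply: big1 => C _.
  by rewrite eq_sym (negbTE HS).
rewrite eqxx /=.
rewrite -(card_imset (Aw alpha p) (@perm_inj _ pi)) -cards_draws card_sumP.
rewrite big_mkcond /=; apply: eq_bigr => C _.
case HC: (C \subset pi @: Aw alpha p); rewrite /= ?andbT ?andbF.
  by rewrite (fintype.subset_trans HC HA).
by case: (_ && _).
Qed.

Lemma flags_count K alpha i : alpha <= K ->
  \sum_(S : {set 'I_K} | #|S| == alpha)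
     \sum_(C : {set 'I_K} | (C \subset S) && (#|C| == i)) 1
  = 'C(K, alpha) * 'C(alpha, i).
Proof.
move=> HaK.
rewrite (eq_bigr (fun _ => 'C(alpha, i))); last first.
  move=> S /eqP HS; rewrite -HS -cards_draws card_sumP big_mkcond /=.
  by apply: eq_bigr => C _; case: (_ && _).
rewrite sum_nat_const -[in 'C(K, _)](card_ord K) -card_draws; congr (_ * _).
by apply: eq_card => S; rewrite !inE.
Qed.

Lemma Gc_val K alpha (p : 'I_K) i (S0 C0 : {set 'I_K}) : alpha <= K ->
  #|S0| = alpha -> C0 \subset S0 -> #|C0| = i ->
  'C(K, alpha) * 'C(alpha, i) * Gc alpha p S0 C0 = K`! * 'C(#|Aw alpha p|, i).
Proof.
move=> HaK HS0 HC0 Hi.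
rewrite -Gc_sum // -flags_count // big_distrl /=.
apply: eq_bigr => S HS; rewrite big_distrl /=; apply: eq_bigr => C /andP[HCS /eqP HC].
rewrite mul1n; apply: Gc_const => //; by [rewrite HS0 (eqP HS) | rewrite HC].
Qed.
Lemma hockey n i : \sum_(p < n) 'C(p, i) = 'C(n, i.+1).
Proof.
elim: n => [|n IH]; first by rewrite big_ord0 bin0n.
by rewrite big_ord_recr /= IH binS.
Qed.

Lemma sum_min alpha i k : 0 < alpha ->
  \sum_(p < alpha + k) 'C(minn (alpha - 1) p, i) = 'C(alpha, i.+1) + k * 'C(alpha - 1, i).
Proof.
move=> H0; elim: k => [|k IH].
  rewrite addn0 mul0n addn0 -hockey; apply: eq_bigr => p _; congr 'C(_, _).
  have := ltn_ord p; lia.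
rewrite addnS big_ord_recr /= IH mulSn.
have -> : minn (alpha - 1) (alpha + k) = alpha - 1 by lia.
lia.
Qed.

Lemma sum_min_rev K alpha i : 0 < alpha -> alpha <= K ->
  \sum_(p < K) 'C(minn (alpha - 1) (K - 1 - p), i) = 'C(alpha, i.+1) + (K - alpha) * 'C(alpha - 1, i).
Proof.
move=> H0 HaK.
rewrite -(sum_min i (K - alpha) H0) subnKC //.
rewrite (reindex_inj rev_ord_inj) /=; apply: eq_bigr => p _.
congr 'C(_, _); have := ltn_ord p; rewrite /=; lia.
Qed.

Lemma Q_id alpha K i : 0 < alpha -> i <= alpha ->
  ('C(alpha, i.+1) + (K - alpha) * 'C(alpha - 1, i)) * (alpha * i.+1)
  = 'C(alpha, i) * ((alpha - i) * ((K - alpha) * i.+1 + alpha)).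
Proof.
move=> H0 Hi.
have E1 : i.+1 * 'C(alpha, i.+1) = (alpha - i) * 'C(alpha, i) by rewrite mul_bin_left.
have E2 : alpha * 'C(alpha - 1, i) = (alpha - i) * 'C(alpha, i).
  by rewrite subn1 mul_bin_down.
rewrite mulnDl.
have -> : 'C(alpha, i.+1) * (alpha * i.+1) = alpha * (i.+1 * 'C(alpha, i.+1)) by lia.
have -> : (K - alpha) * 'C(alpha - 1, i) * (alpha * i.+1) = (K - alpha) * i.+1 * (alpha * 'C(alpha - 1, i)) by lia.
rewrite E1 E2; lia.
Qed.
Local Open Scope ring_scope.
Definition phi (R : realFieldType) (a k x : R) := (a - x) * ((k - a) * (x + 1) + a) / (a * (x + 1)).

Lemma tangent (R : realFieldType) (a k x tau : R) : 0 < a -> 0 <= x -> 0 <= tau ->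
  phi a k tau - ((k - a) / a + (a + 1) / (tau + 1) ^+ 2) * (x - tau) <= phi a k x.
Proof.
move=> Ha Hx Ht.
have Hx1 : x + 1 != 0 by rewrite gt_eqF // ltr_wpDl.
have Ht1 : tau + 1 != 0 by rewrite gt_eqF // ltr_wpDl.
have Ha0 : a != 0 by rewrite gt_eqF.
have E : phi a k x = phi a k tau - ((k - a) / a + (a + 1) / (tau + 1) ^+ 2) * (x - tau)
   + (a + 1) * (x - tau) ^+ 2 / ((x + 1) * (tau + 1) ^+ 2).
  by rewrite /phi; field; rewrite Hx1 Ht1 Ha0.
rewrite E lerDl; apply: divr_ge0; first by apply: mulr_ge0; [lra | exact: sqr_ge0].
by apply: mulr_ge0; [lra | exact: sqr_ge0].
Qed.

Lemma phi_man (R : realFieldType) (a k t : R) : 0 < a -> 0 <= t ->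
  phi a k t - (k - t) / (t + 1) = (k - a) * t * (a - 1 - t) / (a * (t + 1)).
Proof.
move=> Ha Ht.
have Ht1 : t + 1 != 0 by rewrite gt_eqF // ltr_wpDl.
have Ha0 : a != 0 by rewrite gt_eqF.
by rewrite /phi; field; rewrite Ht1 Ha0.
Qed.
Lemma phiQ (R : realFieldType) K alpha i : (0 < alpha)%N -> (i <= alpha)%N -> (alpha <= K)%N ->
  phi (alpha%:R) (K%:R) (i%:R) =
  ('C(alpha, i.+1) + (K - alpha) * 'C(alpha - 1, i))%N%:R / ('C(alpha, i))%:R :> R.
Proof.
move=> H0 Hi HaK.
have Hc : ('C(alpha, i))%:R != 0 :> R by rewrite pnatr_eq0 -lt0n bin_gt0.
have Hd : (alpha%:R * (i%:R + 1)) != 0 :> R.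
  by rewrite mulf_neq0 // ?pnatr_eq0 -?lt0n // natr1 pnatr_eq0.
rewrite /phi; apply/eqP; rewrite eqr_div //.
rewrite -natrB // -natrB ?HaK // natr1 -!natrM -!natrD -!natrM eqr_nat.
apply/eqP; have := Q_id K H0 Hi; lia.
Qed.

Local Open Scope ring_scope.

Lemma cardS (T : finType) (A : {set T}) : #|A| = (\sum_x (x \in A))%N.
Proof. by rewrite -sum1_card big_mkcond; apply: eq_bigr => x _; case: (x \in A). Qed.

Lemma lower_bound (R : realType) K alpha F t (Rl : R) :
  (0 < alpha)%N -> (alpha < K)%N -> (0 < F)%N -> (t <= alpha)%N ->
  achievable_us K alpha F ((t%:R * (Nfiles K alpha F)%:R) / K%:R) Rl ->
  phi (alpha%:R) (K%:R) (t%:R) <= Rl.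
Proof.
move=> H0 HaK HF Ht [B [HB [Z [Hmem [Hself Hdel]]]]].
have HP : forall (f : 'I_F) (pi : {perm 'I_K}) (p : 'I_K),
    #|(f, pi @: Pw alpha p).2| == alpha.
  move=> f pi p; rewrite /= card_imset ?card_Pw //; [exact: ltnW | exact: perm_inj].
pose fl (f : 'I_F) (pi : {perm 'I_K}) (p : 'I_K) : fileT K alpha F := exist _ (f, pi @: Pw alpha p) (HP f pi p).
pose d (f : 'I_F) (pi : {perm 'I_K}) : {ffun 'I_K -> fileT K alpha F} := [ffun u => fl f pi (pi^-1 u)%g].
have dE : forall f pi p, d f pi (pi p) = fl f pi p by move=> *; rewrite ffunE permK.
have Hbound : forall f pi, (\sum_p #|Uset Z (d f pi) pi p|)%:R <= Rl * B%:R.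
  move=> f pi.
  have adm : admissible (d f pi).
    move=> u; rewrite /fileSet ffunE /=.
    rewrite -{1}(permKV pi u); apply: imset_f; apply: Pw_self; lia.
  have [L [HL [enc Hdec]]] := Hdel _ adm.
  apply: le_trans HL; rewrite ler_nat; apply: (chain_bound Hdec).
  move=> p q; rewrite !dE => /(congr1 val) /= [] /(imset_inj (@perm_inj _ pi)).
  by apply: Pw_inj; lia.
pose cx (x : bitT K alpha F B) : {set 'I_K} := [set k | x \in Z k].
have Hcx : forall x, cx x \subset (val x.1).2.
  by move=> x; apply/fintype.subsetP => k; rewrite inE => Hk; exact: Hself Hk.
have memU : forall f pi p x, (x \in Uset Z (d f pi) pi p) =
    [&& (val x.1).1 == f, (pi @: Pw alpha p == (val x.1).2) & (cx x \subset pi @: Aw alpha p)].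
  move=> f pi p x; rewrite /Uset inE dE.
  have -> : (x.1 == fl f pi p) = ((val x.1).1 == f) && ((pi @: Pw alpha p) == (val x.1).2).
    by case: x => [[[f' S'] HS'] b]; rewrite -val_eqE /= xpair_eqE [in X in _ && X]eq_sym.
  case: ((val x.1).1 == f) => //=.
  case ES: (_ == _) => //=.
  move/eqP: ES => ES.
  apply/forallP/fintype.subsetP.
  - move=> Hf k Hk; have := fintype.subsetP (Hcx x) k Hk; rewrite -ES => /imsetP [q Hq Ek].
    rewrite Ek; apply: imset_f; apply: Pw_late => //.
    rewrite ltnNge; apply/negP => Hqp.
    by move: (Hf q); rewrite Hqp /= -Ek; move: Hk; rewrite inE => ->.
  - move=> Hs q; apply/implyP => Hqp; apply/negP => Hx.
    have : pi q \in cx x by rewrite inE.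
    move/Hs => /imsetP [q' Hq' /perm_inj Eq]; subst q'.
    move: Hq'; rewrite inE; lia.
have TE : (\sum_(f : 'I_F) \sum_(pi : {perm 'I_K}) \sum_(p : 'I_K) #|Uset Z (d f pi) pi p|)%N
  = (\sum_(x : bitT K alpha F B) \sum_(p : 'I_K) Gc alpha p ((val x.1).2) (cx x))%N.
  transitivity (\sum_(f : 'I_F) \sum_(pi : {perm 'I_K}) \sum_(x : bitT K alpha F B) \sum_(p : 'I_K)
     (x \in Uset Z (d f pi) pi p))%N.
    apply: eq_bigr => f _; apply: eq_bigr => pi _; rewrite exchange_big /=.
    by apply: eq_bigr => p _; rewrite cardS.
  transitivity (\sum_(f : 'I_F) \sum_(x : bitT K alpha F B) \sum_(pi : {perm 'I_K}) \sum_(p : 'I_K)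
     (x \in Uset Z (d f pi) pi p))%N.
    by apply: eq_bigr => f _; rewrite exchange_big.
  rewrite exchange_big /=; apply: eq_bigr => x _.
  rewrite (bigD1 (val x.1).1) //= [X in (_ + X)%N]big1 ?addn0; last first.
    move=> f Hf; apply: big1 => pi _; apply: big1 => p _.
    by rewrite memU eq_sym (negbTE Hf).
  rewrite exchange_big /=; apply: eq_bigr => p _.
  by rewrite /Gc card_sumP; apply: eq_bigr => pi _; rewrite memU eqxx.
have wx : forall x : bitT K alpha F B,
    (K`!)%:R / ('C(K, alpha))%:R * phi alpha%:R K%:R (#|cx x|%:R) <=
    (\sum_(p : 'I_K) Gc alpha p ((val x.1).2) (cx x))%:R :> R.
  move=> x; set i := #|cx x|.
  have HS : #|(val x.1).2| = alpha by apply/eqP; exact: (valP x.1).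
  have Hi : (i <= alpha)%N by rewrite -HS; apply: subset_leq_card; exact: Hcx.
  have Hv := fun p => Gc_val p (ltnW HaK) HS (Hcx x) (erefl i).
  have Hn : (K`! * ('C(alpha, i.+1) + (K - alpha) * 'C(alpha - 1, i)) <=
             'C(K, alpha) * 'C(alpha, i) * \sum_(p : 'I_K) Gc alpha p ((val x.1).2) (cx x))%N.
    rewrite big_distrr /= (eq_bigr _ (fun p _ => Hv p)) -big_distrr /= leq_mul2l.
    rewrite -(sum_min_rev i H0 (ltnW HaK)); apply/orP; right; apply: leq_sum => p _.
    by apply: leq_bin2l; apply: card_Aw.
  rewrite phiQ // ?(ltnW HaK) //.
  set Q := ('C(alpha, i.+1) + _)%N in Hn *.
  have Hc1 : (0 < ('C(K, alpha))%:R :> R) by rewrite ltr0n bin_gt0 ltnW.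
  have Hc2 : (0 < ('C(alpha, i))%:R :> R) by rewrite ltr0n bin_gt0.
  have -> : (K`!)%:R / ('C(K, alpha))%:R * (Q%:R / ('C(alpha, i))%:R) =
     (K`! * Q)%:R / ('C(K, alpha) * 'C(alpha, i))%:R :> R.
    by rewrite !natrM; field; rewrite !gt_eqF.
  rewrite ler_pdivrMr; last by rewrite natrM mulr_gt0.
  by rewrite -natrM ler_nat [X in (_ <= X)%N]mulnC.
set T := (\sum_(f : 'I_F) \sum_(pi : {perm 'I_K}) \sum_(p : 'I_K) #|Uset Z (d f pi) pi p|)%N in TE.
have Tup : T%:R <= (F * K`!)%:R * (Rl * B%:R).
  rewrite /T natr_sum.
  have H : \sum_(f : 'I_F) (\sum_(pi : {perm 'I_K}) \sum_(p : 'I_K) #|Uset Z (d f pi) pi p|)%N%:R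
      <= \sum_(f : 'I_F) \sum_(pi : {perm 'I_K}) (Rl * B%:R).
    apply: ler_sum => f _; rewrite natr_sum; apply: ler_sum => pi _; exact: Hbound.
  apply: (le_trans H).
  have E : forall f : 'I_F, \sum_(pi : {perm 'I_K}) (Rl * B%:R) = (Rl * B%:R) *+ K`!.
    by move=> f; rewrite sumr_const card_Sn.
  by rewrite (eq_bigr _ (fun f _ => E f)) sumr_const card_ord -mulrnA mulr_natl mulnC.
set a := alpha%:R : R; set k := K%:R : R; set tau := t%:R : R.
set c := (K`!)%:R / ('C(K, alpha))%:R : R.
set sl := (k - a) / a + (a + 1) / (tau + 1) ^+ 2.
have Ha : 0 < a by rewrite ltr0n.
have Hka : a < k by rewrite ltr_nat.
have Hsl : 0 <= sl.
  rewrite /sl addr_ge0 // ?divr_ge0 //; try lra.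
  by rewrite exprn_ge0 // addr_ge0 // ler0n.
have Hc : 0 <= c by rewrite /c divr_ge0 // ler0n.
have HNB : #|{: bitT K alpha F B}| = (Nfiles K alpha F * B)%N.
  rewrite card_prod card_ord card_sig /Nfiles; congr (_ * _)%N.
  rewrite -[in (F * _)%N](card_ord F) -[in 'C(K, _)](card_ord K) -card_draws.
  rewrite -cardsT -cardsX; apply: eq_card => -[f S]; rewrite !inE //.
have HSZ : (\sum_(x : bitT K alpha F B) #|cx x|)%N = (\sum_(k0 : 'I_K) #|Z k0|)%N.
  rewrite (eq_bigr (fun x => \sum_(k0 : 'I_K) (x \in Z k0))%N); last first.
    by move=> x _; rewrite cardS; apply: eq_bigr => k0 _; rewrite inE.
  by rewrite exchange_big /=; apply: eq_bigr => k0 _; rewrite cardS.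
have HZ : (\sum_(k0 : 'I_K) #|Z k0|)%N%:R <= tau * (Nfiles K alpha F)%:R * B%:R.
  rewrite natr_sum.
  apply: le_trans (ler_sum _ (fun k0 _ => Hmem k0)) _.
  rewrite sumr_const card_ord -[_ *+ K]mulr_natl.
  have HK0 : K%:R != 0 :> R by rewrite pnatr_eq0 gtn_eqF // (leq_ltn_trans _ HaK).
  suff -> : K%:R * (t%:R * (Nfiles K alpha F)%:R / K%:R * B%:R) = tau * (Nfiles K alpha F)%:R * B%:R by [].
  by rewrite /tau; field.
have Low : c * ((Nfiles K alpha F * B)%N%:R * phi a k tau) <= T%:R.
  rewrite TE natr_sum.
  apply: le_trans (ler_sum _ (fun x _ => wx x)).
  have step : forall x : bitT K alpha F B,
      c * (phi a k tau - sl * (#|cx x|%:R - tau)) <= c * phi a k (#|cx x|%:R).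
    by move=> x; apply: (ler_wpM2l Hc); apply: tangent; [exact: Ha | exact: ler0n | exact: ler0n].
  apply: le_trans (ler_sum _ (fun x _ => step x)).
  rewrite -mulr_sumr; apply: (ler_wpM2l Hc).
  rewrite sumrB sumr_const -mulr_sumr sumrB sumr_const -natr_sum HSZ HNB -[phi a k tau *+ _]mulr_natl -[tau *+ _]mulr_natl.
  have HZ' : sl * ((\sum_(k0 < K) #|Z k0|)%N%:R - (Nfiles K alpha F * B)%N%:R * tau) <= 0.
    apply: mulr_ge0_le0 => //; rewrite subr_le0 natrM; apply: (le_trans HZ).
    by rewrite [_ * tau]mulrC mulrA.
  by rewrite [_ * tau]mulrC in HZ' *; lra.
have E : c * (Nfiles K alpha F * B)%N%:R = (F * K`!)%:R * B%:R.
  rewrite /c /Nfiles !natrM; field.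
  by rewrite pnatr_eq0 -lt0n bin_gt0 ltnW.
have HPos : 0 < (F * K`!)%:R * B%:R :> R.
  by rewrite -natrM ltr0n !muln_gt0 HF fact_gt0 HB.
have := le_trans Low Tup; rewrite [c * _]mulrA E => H.
have H' : phi a k tau * ((F * K`!)%:R * B%:R) <= Rl * ((F * K`!)%:R * B%:R).
  by rewrite mulrC (le_trans H) // mulrCA mulrA.
by rewrite -(ler_pM2r HPos).
Qed.

Lemma trivial_ach (R : realType) K alpha F (M : R) : 0 <= M ->
  achievable_us K alpha F M (#|{: bitT K alpha F 1}|%:R).
Proof.
move=> HM; exists 1%N; split => //.
exists (fun _ => finset.set0); split; first by move=> k; rewrite cards0 mulr1.
split; first by move=> k x; rewrite inE.
move=> d _; exists #|{: bitT K alpha F 1}|; split; first by rewrite mulr1.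
exists (fun W => fgraph W) => k.
exists (fun s _ => [ffun i => tnth s (enum_rank (d k, i))]) => W.
by apply/ffunP => i; rewrite !ffunE tnth_fgraph enum_rankK.
Qed.

Lemma Rstar_lb (R : realType) K alpha F t :
  (0 < alpha)%N -> (alpha < K)%N -> (0 < F)%N -> (t <= alpha)%N ->
  phi (alpha%:R) (K%:R) (t%:R) <= Rstar_t R K alpha F t.
Proof.
move=> H0 HaK HF Ht; rewrite /Rstar_t /Rstar_us.
apply: lb_le_inf.
  exists (#|{: bitT K alpha F 1}|%:R); apply: trivial_ach.
  by rewrite divr_ge0 // mulr_ge0.
move=> Rl HRl; exact: lower_bound H0 HaK HF Ht HRl.
Qed.

Unset Implicit Arguments.

Theorem corollary1 (R : realType) (K alpha F : nat) :
  (3 <= K)%N -> (2 <= alpha)%N -> (alpha <= K - 1)%N -> (0 < F)%N ->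
  (K <= Nfiles K alpha F)%N ->
  (forall t : nat, (t <= alpha - 1)%N ->
     1 <= Rstar_t R K alpha F t / R_MAN R K t) /\
  (forall t : nat, (1 <= t)%N -> (t <= alpha - 2)%N ->
     1 < Rstar_t R K alpha F t / R_MAN R K t).
Proof.
move=> HK Ha HaK HF _.
have H0 : (0 < alpha)%N by lia.
have HaK' : (alpha < K)%N by lia.
have Hman : forall t : nat, (t < alpha)%N -> 0 < R_MAN R K t.
  move=> t Ht; rewrite /R_MAN divr_gt0 //; last by rewrite ltr_wpDl.
  by rewrite subr_gt0 ltr_nat; lia.
have Hdiff : forall t : nat, phi alpha%:R K%:R t%:R - R_MAN R K t =
    (K%:R - alpha%:R) * t%:R * (alpha%:R - 1 - t%:R) / (alpha%:R * (t%:R + 1)).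
  by move=> t; rewrite /R_MAN phi_man // ltr0n.
have Hka : alpha%:R < K%:R :> R by rewrite ltr_nat.
split.
- move=> t Ht.
  have Ht' : (t < alpha)%N by lia.
  rewrite ler_pdivlMr ?Hman // mul1r.
  apply: (le_trans _ (Rstar_lb R H0 HaK' HF (ltnW Ht'))).
  rewrite -subr_ge0 Hdiff; apply: divr_ge0.
    apply: mulr_ge0; first by apply: mulr_ge0; [lra | exact: ler0n].
    have : (t.+1)%:R <= alpha%:R :> R by rewrite ler_nat.
    rewrite -natr1; lra.
  by apply: mulr_ge0; [exact: ler0n | rewrite addr_ge0 // ler0n].
- move=> t Ht1 Ht2.
  have Ht' : (t < alpha)%N by lia.
  rewrite ltr_pdivlMr ?Hman // mul1r.
  apply: (lt_le_trans _ (Rstar_lb R H0 HaK' HF (ltnW Ht'))).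
  rewrite -subr_gt0 Hdiff; apply: divr_gt0.
    apply: mulr_gt0; first by apply: mulr_gt0; [lra | rewrite ltr0n].
    have : (t.+1)%:R < alpha%:R :> R by rewrite ltr_nat; lia.
    rewrite -natr1; lra.
  by apply: mulr_gt0; [rewrite ltr0n | rewrite ltr_wpDl // ler0n].
Qed.
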